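(* Assume $\tau_h<\sqrt{1+\boldsymbol\kappa^{-2}}$, and let $\mathcal T_h$ be an ADT. Let $T\in\mathcal T_h$ be a triangle whose edge vectors are $he,hf,hg$, with $e,f,g\in\mathbb Z^2$ oriented so that $e+f+g=0$. Then: (i) $\max\{\|e\|,\|f\|,\|g\|\}\le2\boldsymbol\kappa$; (ii) $|\det(e,f)|=1$, hence $|T|=h^2/2$; (iii) $\langle e,\mathbf M(z)f\rangle\le\theta_h$ for every $z\in T$, where $\theta_h:=\boldsymbol\kappa(3+9\tau_{2h}^2)(\tau_{2h}^2-1)$.
   Context: Let $\mathbf D:\mathbb R^2\to S_2^+$ be continuous and $\mathbb Z^2$-periodic. Set $\mathbf M(z):=\det(\mathbf D(z))^{1/2}\mathbf D(z)^{-1}$, $\|e\|_M:=\sqrt{\langle e,Me\rangle}$, $\kappa(M):=\sqrt{\|M\|\|M^{-1}\|}$, and $\boldsymbol\kappa:=\max_z\kappa(\mathbf D(z))$. Let $h=1/n$ for an integer $n\ge 1$. Voronoi construction: $\delta_p(q):=\|q-p\|_{\mathbf M(p)}$, $\Delta_h(q):=\min_{p\in h\mathbb Z^2}\delta_p(q)$, and $\mathrm{Vor}_h(p):=\{q:\delta_p(q)=\Delta_h(q)\}$. For each point $q$ lying in the Voronoi cells of at least three distinct grid points, let $T_q$ be the convex hull of all grid points whose cells contain $q$, and let $\mathcal Q_h:=\{T_q\}$. When $\mathcal Q_h$ is a polygonization of $\mathbb R^2$ into strictly convex polygons with vertex set $h\mathbb Z^2$ (true under the assumption), an ADT $\mathcal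 T_h$ is any $\mathbb Z^2$-periodic triangulation obtained by triangulating each element of $\mathcal Q_h$ without adding vertices. $\tau(p,q)$ is the smallest $\tau\ge1$ with $\tau^{-2}\mathbf M(p)\le\mathbf M(q)\le\tau^2\mathbf M(p)$. For any $h>0$, $\tau_h:=\max\{\tau(p,q):\|p-q\|\le2\boldsymbol\kappa h\}$. *)

(* Defs.v *)
From Stdlib Require Import Reals List ZArith.
Open Scope R_scope.

Definition R2 : Type := (R * R)%type.
Definition vadd (u v : R2) : R2 := (fst u + fst v, snd u + snd v).
Definition vsub (u v : R2) : R2 := (fst u - fst v, snd u - snd v).
Definition vscale (t : R) (u : R2) : R2 := (t * fst u, t * snd u).
Definition dot (u v : R2) : R := fst u * fst v + snd u * snd v.
Definition enorm (u : R2) : R := sqrt (dot u u).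
Definition det2 (u v : R2) : R := fst u * snd v - snd u * fst v.
Definition zvec (k : Z * Z) : R2 := (IZR (fst k), IZR (snd k)).

(** Symmetric 2x2 matrices [[a,b],[b,c]] represented by (a,b,c). *)
Definition Sym2 : Type := (R * R * R)%type.
Definition sa (m : Sym2) : R := fst (fst m).
Definition sb (m : Sym2) : R := snd (fst m).
Definition sc (m : Sym2) : R := snd m.
Definition sdet (m : Sym2) : R := sa m * sc m - sb m * sb m.
Definition mulv (m : Sym2) (x : R2) : R2 :=
  (sa m * fst x + sb m * snd x, sb m * fst x + sc m * snd x).
Definition bilin (m : Sym2) (u v : R2) : R := dot u (mulv m v).
Definition quad (m : Sym2) (x : R2) : R := bilin m x x.
Definition smul (t : R) (m : Sym2) : Sym2 := (t * sa m, t * sb m, t * sc m).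
Definition sinv (m : Sym2) : Sym2 :=
  (sc m / sdet m, - sb m / sdet m, sa m / sdet m).
Definition SPD (m : Sym2) : Prop := 0 < sa m /\ 0 < sdet m.
Definition loewner_le (A B : Sym2) : Prop := forall x, quad A x <= quad B x.

Definition is_opnorm (m : Sym2) (r : R) : Prop :=
  is_lub (fun t => exists x, enorm x = 1 /\ t = enorm (mulv m x)) r.
Definition is_kappa (m : Sym2) (k : R) : Prop :=
  exists r1 r2, is_opnorm m r1 /\ is_opnorm (sinv m) r2 /\ k = sqrt (r1 * r2).

Definition IsMax (S : R -> Prop) (x : R) : Prop := S x /\ forall y, S y -> y <= x.
Definition IsMin (S : R -> Prop) (x : R) : Prop := S x /\ forall y, S y -> x <= y.

Definition cont_R2 (f : R2 -> R) : Prop :=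
  forall z eps, 0 < eps -> exists del, 0 < del /\
    forall w, enorm (vsub w z) < del -> Rabs (f w - f z) < eps.
Definition D_admissible (D : R2 -> Sym2) : Prop :=
  (forall z, SPD (D z)) /\
  cont_R2 (fun z => sa (D z)) /\ cont_R2 (fun z => sb (D z)) /\
  cont_R2 (fun z => sc (D z)) /\
  (forall z k, D (vadd z (zvec k)) = D z).

Definition Mof (D : R2 -> Sym2) (z : R2) : Sym2 :=
  smul (sqrt (sdet (D z))) (sinv (D z)).
Definition Mnorm (m : Sym2) (e : R2) : R := sqrt (quad m e).

Definition is_kappa_max (D : R2 -> Sym2) (K : R) : Prop :=
  IsMax (fun k => exists z, is_kappa (D z) k) K.

Definition tau_adm (D : R2 -> Sym2) (p q : R2) (t : R) : Prop :=
  1 <= t /\ loewner_le (smul (/ (t * t)) (Mof D p)) (Mof D q)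
         /\ loewner_le (Mof D q) (smul (t * t) (Mof D p)).
Definition is_tau (D : R2 -> Sym2) (p q : R2) (t : R) : Prop :=
  IsMin (tau_adm D p q) t.
Definition is_tau_h (D : R2 -> Sym2) (K h : R) (t : R) : Prop :=
  IsMax (fun s => exists p q, enorm (vsub p q) <= 2 * K * h /\ is_tau D p q s) t.

Definition grid (h : R) (p : R2) : Prop := exists k : Z * Z, p = vscale h (zvec k).
Definition delta (D : R2 -> Sym2) (p q : R2) : R := Mnorm (Mof D p) (vsub q p).
Definition inVor (D : R2 -> Sym2) (h : R) (p q : R2) : Prop :=
  grid h p /\ forall p', grid h p' -> delta D p q <= delta D p' q.
Definition Gen (D : R2 -> Sym2) (h : R) (q : R2) : R2 -> Prop := fun p => inVor D h p q.
Definition multi_point (D : R2 -> Sym2) (h : R) (q : R2) : Prop :=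
  exists p1 p2 p3, Gen D h q p1 /\ Gen D h q p2 /\ Gen D h q p3 /\
    p1 <> p2 /\ p1 <> p3 /\ p2 <> p3.

Definition conv (S : R2 -> Prop) (x : R2) : Prop :=
  exists l : list (R * R2),
    Forall (fun wp => 0 <= fst wp /\ S (snd wp)) l /\
    fold_right (fun wp acc => fst wp + acc) 0 l = 1 /\
    fold_right (fun wp acc => vadd (vscale (fst wp) (snd wp)) acc) (0, 0) l = x.
Definition Tq (D : R2 -> Sym2) (h : R) (q : R2) : R2 -> Prop := conv (Gen D h q).

Definition interior (S : R2 -> Prop) (x : R2) : Prop :=
  exists eps, 0 < eps /\ forall y, enorm (vsub y x) < eps -> S y.
Definition set_eq (A B : R2 -> Prop) : Prop := forall x, A x <-> B x.
Definition subset (A B : R2 -> Prop) : Prop := forall x, A x -> B x.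
Definition translate (V : R2 -> Prop) (k : Z * Z) : R2 -> Prop :=
  fun x => V (vsub x (zvec k)).

(** A triangle is given by its vertex set V = {a,b,c} (non-collinear);
    the triangle itself (as a point set) is conv V. *)
Definition is_triangle_vs (V : R2 -> Prop) : Prop :=
  exists a b c, det2 (vsub b a) (vsub c a) <> 0 /\
    set_eq V (fun x => x = a \/ x = b \/ x = c).

(** An ADT: a Z^2-periodic triangulation obtained by triangulating each
    element T_q of Q_h without adding vertices. Th is the set of triangles
    (by vertex sets). *)
Definition ADT (D : R2 -> Sym2) (h : R) (Th : (R2 -> Prop) -> Prop) : Prop :=
  (forall V, Th V -> is_triangle_vs V) /\
  (forall V V', Th V -> set_eq V V' -> Th V') /\
  (forall V k, Th V -> Th (translate V k)) /\
  (forall V, Th V -> exists q, multi_point D h q /\ subset V (Gen D h q)) /\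
  (forall q, multi_point D h q ->
     forall x, Tq D h q x -> exists V, Th V /\ subset V (Gen D h q) /\ conv V x) /\
  (forall q V V', multi_point D h q -> Th V -> Th V' ->
     subset V (Gen D h q) -> subset V' (Gen D h q) ->
     (exists x, interior (conv V) x /\ interior (conv V') x) -> set_eq V V').

(* Main.v *)
Require Import Defs.
From Stdlib Require Import Reals List ZArith Lra Lia Psatz Classical.
Open Scope R_scope.

Lemma quad_expand m x : quad m x =
  sa m * fst x * fst x + 2 * sb m * fst x * snd x + sc m * snd x * snd x.
Proof. unfold quad, bilin, dot, mulv; simpl; ring. Qed.

Lemma quad_smul t m x : quad (smul t m) x = t * quad m x.
Proof. rewrite !quad_expand; unfold smul, sa, sb, sc; simpl; ring. Qed.

Lemma bilin_polar m u v :
  bilin m u v = (quad m (vadd u v) - quad m (vsub u v)) / 4.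
Proof. rewrite !quad_expand; unfold bilin, dot, mulv, vadd, vsub; simpl; field. Qed.

Lemma enorm_le v B : 0 <= B -> dot v v <= B * B -> enorm v <= B.
Proof.
  intros HB H. unfold enorm. rewrite <- (sqrt_square B HB). now apply sqrt_le_1_alt.
Qed.

Lemma dot_nonneg v : 0 <= dot v v.
Proof. unfold dot; nra. Qed.

Lemma CS u w : dot u w <= enorm u * enorm w.
Proof.
  unfold enorm. rewrite <- sqrt_mult by apply dot_nonneg.
  destruct (Rle_lt_dec (dot u w) 0) as [H|H].
  - pose proof (sqrt_pos (dot u u * dot w w)); lra.
  - rewrite <- (sqrt_square (dot u w)) by lra. apply sqrt_le_1_alt.
    destruct u as [u1 u2]; destruct w as [w1 w2]; unfold dot; simpl.
    pose proof (Rle_0_sqr (u1*w2 - u2*w1)). unfold Rsqr in *. nra.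
Qed.

Lemma opnorm_ex m : exists r, is_opnorm m r.
Proof.
  destruct m as [[A B] C].
  set (E := fun t => exists x, enorm x = 1 /\ t = enorm (mulv (A,B,C) x)).
  assert (Hb : bound E).
  { exists (sqrt (A*A + 2*(B*B) + C*C)). intros t [x [Hx ->]].
    unfold enorm. apply sqrt_le_1_alt.
    assert (Hd : dot x x = 1).
    { unfold enorm in Hx. rewrite <- (sqrt_sqrt (dot x x)) by apply dot_nonneg.
      rewrite Hx; ring. }
    destruct x as [x1 x2]; unfold dot, mulv, sa, sb, sc in *; simpl in *.
    pose proof (Rle_0_sqr (A*x2 - B*x1)). pose proof (Rle_0_sqr (B*x2 - C*x1)).
    unfold Rsqr in *. nra. }
  assert (He : exists t, E t).
  { exists (enorm (mulv (A,B,C) (1,0))). exists (1,0). split; auto.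
    unfold enorm, dot; simpl. replace (1*1+0*0) with 1 by ring. apply sqrt_1. }
  destruct (completeness E Hb He) as [r Hr]. now exists r.
Qed.

Lemma unit_dot x : enorm x = 1 -> dot x x = 1.
Proof. intros Hx. unfold enorm in Hx. rewrite <- (sqrt_sqrt (dot x x)) by apply dot_nonneg.
  rewrite Hx; ring. Qed.

Lemma dot_unit x : dot x x = 1 -> enorm x = 1.
Proof. intros H; unfold enorm; rewrite H; apply sqrt_1. Qed.

Lemma kappa_unit m k : SPD m -> is_kappa m k ->
  forall u, dot u u = 1 -> quad (smul (sqrt (sdet m)) (sinv m)) u <= k.
Proof.
  intros [HA HD] [r1 [r2 [H1 [H2 ->]]]] u Hu.
  destruct m as [[A B] C]. unfold sdet, sa, sb, sc in *; simpl in *.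
  destruct u as [u1 u2]. simpl in *.
  set (P := A*u2*u2 - 2*B*u1*u2 + C*u1*u1).
  assert (HP : 0 <= P).
  { assert (HE : A * P = (A*u2 - B*u1)*(A*u2-B*u1) + (A*C-B*B)*(u1*u1)) by (unfold P; ring).
    assert (0 <= A * P) by (rewrite HE; pose proof (Rle_0_sqr (A*u2 - B*u1)); pose proof (Rle_0_sqr u1); unfold Rsqr in *; nra).
    destruct (Rle_lt_dec 0 P); auto. nra. }
  assert (Hr1 : P <= r1).
  { destruct H1 as [Hub _]. eapply Rle_trans; [|apply Hub; exists (-u2, u1); split; [apply dot_unit; unfold dot in *; simpl in *; nra|reflexivity]].
    pose proof (CS (-u2,u1) (mulv (A,B,C) (-u2,u1))) as HC.
    rewrite (dot_unit (-u2,u1)) in HC by (unfold dot in *; simpl in *; nra).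
    unfold P; unfold dot, mulv, sa, sb, sc in *; simpl in *; nra. }
  set (Dl := A*C - B*B) in *.
  assert (Hr2 : P / Dl <= r2).
  { destruct H2 as [Hub _]. eapply Rle_trans; [|apply Hub; exists (u1, u2); split; [apply dot_unit; auto|reflexivity]].
    pose proof (CS (u1,u2) (mulv (sinv (A,B,C)) (u1,u2))) as HC.
    rewrite (dot_unit (u1,u2)) in HC by auto.
    replace (P / Dl) with (dot (u1, u2) (mulv (sinv (A, B, C)) (u1, u2))); [lra|].
    unfold P, dot, mulv, sinv, sdet, sa, sb, sc; simpl. fold Dl. field. lra. }
  rewrite quad_expand; unfold smul, sinv, sdet, sa, sb, sc; simpl. fold Dl.
  set (s := sqrt Dl).
  assert (Hs : s * s = Dl) by (apply sqrt_sqrt; lra).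
  assert (Hspos : 0 < s) by (apply sqrt_lt_R0; lra).
  replace (s * (C / Dl) * u1 * u1 + 2 * (s * (- B / Dl)) * u1 * u2 + s * (A / Dl) * u2 * u2)
    with (s * (P / Dl)) by (unfold P; field; lra).
  assert (HPD : 0 <= P / Dl) by (unfold Rdiv; apply Rmult_le_pos; [lra|apply Rlt_le, Rinv_0_lt_compat; lra]).
  rewrite <- (sqrt_square (s * (P / Dl))) by nra.
  apply sqrt_le_1_alt.
  replace (s * (P / Dl) * (s * (P / Dl))) with (P * (P / Dl)).
  2:{ replace (s * (P / Dl) * (s * (P / Dl))) with ((s*s) * (P/Dl) * (P/Dl)) by ring.
      rewrite Hs. field. lra. }
  apply Rmult_le_compat; lra.
Qed.
Lemma quad_vscale m t x : quad m (vscale t x) = t * t * quad m x.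
Proof. rewrite !quad_expand; unfold vscale; simpl; ring. Qed.

Definition rot (x : R2) : R2 := (- snd x, fst x).

Lemma Mform m x : SPD m ->
  0 <= quad (smul (sqrt (sdet m)) (sinv m)) x /\
  dot x x * dot x x <= quad (smul (sqrt (sdet m)) (sinv m)) x * quad (smul (sqrt (sdet m)) (sinv m)) (rot x).
Proof.
  intros [HA HD]. destruct m as [[A B] C]. unfold sdet, sa, sb, sc in *; simpl in *.
  set (Dl := A*C - B*B) in *.
  set (s := sqrt Dl).
  assert (Hs : s * s = Dl) by (apply sqrt_sqrt; lra).
  assert (Hspos : 0 < s) by (apply sqrt_lt_R0; lra).
  destruct x as [x1 x2]. rewrite !quad_expand; unfold rot, dot, smul, sinv, sdet, sa, sb, sc; simpl. fold Dl. fold s.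
  set (P := C*x1*x1 - 2*B*x1*x2 + A*x2*x2).
  set (Q := A*x1*x1 + 2*B*x1*x2 + C*x2*x2).
  assert (HP : 0 <= P).
  { assert (HE : A * P = (A*x2 - B*x1)*(A*x2-B*x1) + Dl*(x1*x1)) by (unfold P, Dl; ring).
    assert (0 <= A * P) by (rewrite HE; pose proof (Rle_0_sqr (A*x2 - B*x1)); pose proof (Rle_0_sqr x1); unfold Rsqr in *; nra).
    destruct (Rle_lt_dec 0 P); auto. nra. }
  assert (HPQ : P * Q = Dl * ((x1*x1+x2*x2)*(x1*x1+x2*x2)) + ((A-C)*x1*x2 - B*(x1*x1-x2*x2))*((A-C)*x1*x2 - B*(x1*x1-x2*x2)))
    by (unfold P, Q, Dl; ring).
  set (t := s / Dl).
  assert (Ht : t * t * Dl = 1) by (unfold t; replace (s/Dl*(s/Dl)*Dl) with (s*s/Dl) by (field; lra); rewrite Hs; field; lra).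
  assert (Htp : 0 < t) by (unfold t; apply Rdiv_lt_0_compat; lra).
  replace (s * (C / Dl) * x1 * x1 + 2 * (s * (- B / Dl)) * x1 * x2 + s * (A / Dl) * x2 * x2) with (t * P)
    by (unfold t, P; field; lra).
  replace (s * (C / Dl) * - x2 * - x2 + 2 * (s * (- B / Dl)) * - x2 * x1 + s * (A / Dl) * x1 * x1) with (t * Q)
    by (unfold t, Q; field; lra).
  split. { nra. }
  replace (t * P * (t * Q)) with ((t*t) * (P * Q)) by ring. rewrite HPQ.
  pose proof (Rle_0_sqr ((A-C)*x1*x2 - B*(x1*x1-x2*x2))). unfold Rsqr in *.
  assert (0 <= t*t) by nra.
  replace ((x1 * x1 + x2 * x2) * (x1 * x1 + x2 * x2)) with (t*t*Dl * ((x1 * x1 + x2 * x2) * (x1 * x1 + x2 * x2))) at 1 by (rewrite Ht; ring).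
  nra.
Qed.

Lemma kappa_bounds D K : (forall z, SPD (D z)) -> is_kappa_max D K ->
  (forall z x, quad (Mof D z) x <= K * dot x x) /\
  (forall z x, dot x x <= K * quad (Mof D z) x) /\ 1 <= K.
Proof.
  intros HS [_ HK].
  assert (HU : forall z x, quad (Mof D z) x <= K * dot x x).
  { intros z x.
    destruct (opnorm_ex (D z)) as [r1 H1]. destruct (opnorm_ex (sinv (D z))) as [r2 H2].
    assert (Hk : is_kappa (D z) (sqrt (r1 * r2))) by (exists r1, r2; auto).
    assert (HkK : sqrt (r1*r2) <= K) by (apply HK; exists z; auto).
    pose proof (kappa_unit (D z) _ (HS z) Hk) as Hu.
    destruct (Req_dec (dot x x) 0) as [H0|H0].
    - assert (fst x = 0 /\ snd x = 0) as [Hx1 Hx2] by (destruct x; unfold dot in H0; simpl in *; nra).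
      rewrite quad_expand, H0, Hx1, Hx2. lra.
    - pose proof (dot_nonneg x).
      set (s := sqrt (dot x x)).
      assert (Hs : s * s = dot x x) by (apply sqrt_sqrt; lra).
      assert (Hsp : 0 < s) by (apply sqrt_lt_R0; lra).
      assert (Hx : quad (Mof D z) x = s * s * quad (Mof D z) (vscale (/ s) x)).
      { rewrite <- quad_vscale. f_equal. destruct x; unfold vscale; simpl; f_equal; field; lra. }
      rewrite Hx. rewrite <- Hs.
      assert (dot (vscale (/ s) x) (vscale (/ s) x) = 1).
      { replace (dot (vscale (/ s) x) (vscale (/ s) x)) with (/s * /s * dot x x)
          by (destruct x; unfold vscale, dot; simpl; ring).
        rewrite <- Hs. field. lra. }
      specialize (Hu _ H3). unfold Mof. nra. }
  assert (HL : forall z x, dot x x <= K * quad (Mof D z) x).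
  { intros z x. destruct (Mform (D z) x (HS z)) as [Hp Hr].
    fold (Mof D z) in Hp, Hr.
    pose proof (HU z (rot x)) as HR.
    assert (Hd : dot (rot x) (rot x) = dot x x) by (destruct x; unfold rot, dot; simpl; ring).
    rewrite Hd in HR. pose proof (dot_nonneg x).
    destruct (Req_dec (dot x x) 0) as [H0|H0].
    - rewrite H0.
      destruct (Rle_lt_dec 0 K) as [HK0|HK0]; [nra|].
      exfalso. pose proof (HU z (1,0)) as H10. destruct (Mform (D z) (1,0) (HS z)) as [Hp1 Hr1].
      fold (Mof D z) in Hp1, Hr1. unfold dot, rot in *; simpl in *. nra.
    - assert (0 < dot x x) by lra.
      assert (dot x x * dot x x <= quad (Mof D z) x * (K * dot x x)).
      { eapply Rle_trans; [exact Hr|]. apply Rmult_le_compat_l; auto. }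
      nra. }
  split; auto. split; auto.
  pose proof (HU (0,0) (1,0)) as Ha. pose proof (HL (0,0) (1,0)) as Hb.
  unfold dot in *; simpl in *.
  destruct (Mform (D (0,0)) (1,0) (HS _)) as [Hp _]. fold (Mof D (0,0)) in Hp.
  nra.
Qed.
Section Tau.
Variable D : R2 -> Sym2.
Variable K : R.
Hypothesis KU : forall z x, quad (Mof D z) x <= K * dot x x.
Hypothesis KL : forall z x, dot x x <= K * quad (Mof D z) x.
Hypothesis K1 : 1 <= K.

Lemma quad_nonneg z x : 0 <= quad (Mof D z) x.
Proof. pose proof (KL z x); pose proof (dot_nonneg x). nra. Qed.

Lemma tau_adm_iff p q t : 1 <= t ->
  tau_adm D p q t <-> ((forall x, quad (Mof D q) x <= t*t*quad (Mof D p) x) /\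
                     (forall x, quad (Mof D p) x <= t*t*quad (Mof D q) x)).
Proof.
  intros Ht. unfold tau_adm, loewner_le. split.
  - intros [_ [H1 H2]]. split; intros x.
    + specialize (H2 x). rewrite quad_smul in H2. lra.
    + specialize (H1 x). rewrite quad_smul in H1.
      assert (0 < t*t) by nra.
      apply (Rmult_le_compat_l (t*t)) in H1; [|lra].
      replace (t * t * (/ (t * t) * quad (Mof D p) x)) with (quad (Mof D p) x) in H1 by (field; lra).
      lra.
  - intros [H1 H2]. split; auto. split; intros x; rewrite quad_smul.
    + specialize (H2 x).
      assert (0 < t*t) by nra.
      apply (Rmult_le_reg_l (t*t)); [lra|].
      replace (t * t * (/ (t * t) * quad (Mof D p) x)) with (quad (Mof D p) x) by (field; lra).
      lra.
    + apply H1.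
Qed.

Lemma tau_K p q : tau_adm D p q K.
Proof.
  apply tau_adm_iff; auto. split; intros x.
  - pose proof (KU q x); pose proof (KL p x). nra.
  - pose proof (KU p x); pose proof (KL q x). nra.
Qed.

Lemma tau_exists p q : exists s, is_tau D p q s.
Proof.
  set (E := tau_adm D p q).
  set (E' := fun u => exists t, E t /\ u = - t).
  assert (Hb : bound E'). { exists (-1). intros u [t [[Ht _] ->]]. lra. }
  assert (He : exists u, E' u). { exists (-K). exists K. split; auto. apply tau_K. }
  destruct (completeness E' Hb He) as [m [Hub Hl]].
  assert (Hlow : forall t, E t -> - m <= t).
  { intros t Ht. assert (- t <= m) by (apply Hub; exists t; auto). lra. }
  assert (H1 : 1 <= - m).
  { assert (m <= -1) by (apply Hl; intros u [t [[Ht _] ->]]; lra). lra. }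
  assert (Happ : forall t1, - m < t1 -> exists t, E t /\ t < t1).
  { intros t1 Ht1. destruct (classic (exists t, E t /\ t < t1)) as [|Hn]; auto.
    exfalso. assert (m <= - t1).
    { apply Hl. intros u [t [Ht ->]].
      destruct (Rle_lt_dec t1 t); [lra|]. exfalso; apply Hn; exists t; auto. }
    lra. }
  set (t0 := - m) in *.
  exists t0. split; [|exact Hlow].
  unfold E. apply tau_adm_iff; auto. split; intros x.
  - destruct (Rle_lt_dec (quad (Mof D q) x) (t0*t0*quad (Mof D p) x)) as [|Hc]; auto.
    exfalso.
    pose proof (quad_nonneg p x). pose proof (quad_nonneg q x).
    destruct (Req_dec (quad (Mof D p) x) 0) as [Z|Z].
    + pose proof (tau_K p q) as HK. apply tau_adm_iff in HK; auto. destruct HK as [HK _].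
      specialize (HK x). rewrite Z in *. nra.
    + set (a := quad (Mof D p) x) in *. set (b := quad (Mof D q) x) in *.
      assert (Ha : 0 < a) by lra.
      set (t1 := sqrt (b / a)).
      assert (Ht1 : t1 * t1 = b / a) by (apply sqrt_sqrt; unfold Rdiv; apply Rmult_le_pos; [lra|apply Rlt_le, Rinv_0_lt_compat; lra]).
      assert (Ht1p : 0 <= t1) by apply sqrt_pos.
      assert (t0 * t0 < t1 * t1).
      { rewrite Ht1. apply (Rmult_lt_reg_r a); auto. replace (b/a*a) with b by (field; lra). lra. }
      assert (t0 < t1) by nra.
      destruct (Happ t1) as [t [Ht Htl]]; auto.
      pose proof (Hlow t Ht).
      apply tau_adm_iff in Ht; [|lra]. destruct Ht as [Ht _]. specialize (Ht x). fold a b in Ht.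
      assert (Htt : t * t < t1 * t1) by nra.
      rewrite Ht1 in Htt.
      assert (t * t * a < b).
      { apply (Rmult_lt_compat_r a) in Htt; auto. replace (b/a*a) with b in Htt by (field; lra). lra. }
      lra.
  - destruct (Rle_lt_dec (quad (Mof D p) x) (t0*t0*quad (Mof D q) x)) as [|Hc]; auto.
    exfalso.
    pose proof (quad_nonneg p x). pose proof (quad_nonneg q x).
    destruct (Req_dec (quad (Mof D q) x) 0) as [Z|Z].
    + pose proof (tau_K p q) as HK. apply tau_adm_iff in HK; auto. destruct HK as [_ HK].
      specialize (HK x). rewrite Z in *. nra.
    + set (a := quad (Mof D q) x) in *. set (b := quad (Mof D p) x) in *.
      assert (Ha : 0 < a) by lra.
      set (t1 := sqrt (b / a)).
      assert (Ht1 : t1 * t1 = b / a) by (apply sqrt_sqrt; unfold Rdiv; apply Rmult_le_pos; [lra|apply Rlt_le, Rinv_0_lt_compat; lra]).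
      assert (Ht1p : 0 <= t1) by apply sqrt_pos.
      assert (t0 * t0 < t1 * t1).
      { rewrite Ht1. apply (Rmult_lt_reg_r a); auto. replace (b/a*a) with b by (field; lra). lra. }
      assert (t0 < t1) by nra.
      destruct (Happ t1) as [t [Ht Htl]]; auto.
      pose proof (Hlow t Ht).
      apply tau_adm_iff in Ht; [|lra]. destruct Ht as [_ Ht]. specialize (Ht x). fold a b in Ht.
      assert (Htt : t * t < t1 * t1) by nra.
      rewrite Ht1 in Htt.
      assert (t * t * a < b).
      { apply (Rmult_lt_compat_r a) in Htt; auto. replace (b/a*a) with b in Htt by (field; lra). lra. }
      lra.
Qed.

Lemma tau_h_use h t p q : is_tau_h D K h t -> enorm (vsub p q) <= 2 * K * h ->
  1 <= t /\ (forall x, quad (Mof D q) x <= t*t*quad (Mof D p) x) /\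
            (forall x, quad (Mof D p) x <= t*t*quad (Mof D q) x).
Proof.
  intros [_ Hmax] Hd. destruct (tau_exists p q) as [s Hs].
  assert (Hst : s <= t) by (apply Hmax; exists p, q; auto).
  destruct Hs as [[Hs1 Hs] _].
  assert (Ht1 : 1 <= t) by lra.
  assert (Hadm : tau_adm D p q s) by (split; auto).
  apply tau_adm_iff in Hadm; auto. destruct Hadm as [A1 A2].
  split; auto. split; intros x.
  - specialize (A1 x). pose proof (quad_nonneg p x). assert (s*s <= t*t) by nra. nra.
  - specialize (A2 x). pose proof (quad_nonneg q x). assert (s*s <= t*t) by nra. nra.
Qed.
End Tau.
Open Scope Z_scope.
Lemma lattice_aux (p1 p2 r1 r2 w01 w02 : Z) :
  let d := p1*r2 - p2*r1 in
  2 <= d ->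
  ~ ((w01*r2 - w02*r1) mod d = 0 /\ (p1*w02 - p2*w01) mod d = 0) ->
  exists w1 w2 : Z,
    let x := w1*r2 - w2*r1 in let y := p1*w2 - p2*w1 in
    0 <= x /\ 0 <= y /\ x + y <= d /\ ~ (x = 0 /\ y = 0) /\
    ~ (x = d /\ y = 0) /\ ~ (x = 0 /\ y = d).
Proof.
  intros d Hd Hn.
  set (A0 := w01*r2 - w02*r1) in *. set (B0 := p1*w02 - p2*w01) in *.
  pose proof (Z.div_mod A0 d ltac:(lia)) as EA.
  pose proof (Z.div_mod B0 d ltac:(lia)) as EB.
  pose proof (Z.mod_pos_bound A0 d ltac:(lia)) as BA.
  pose proof (Z.mod_pos_bound B0 d ltac:(lia)) as BB.
  set (k1 := A0 / d) in *. set (k2 := B0 / d) in *.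
  set (ra := A0 mod d) in *. set (rb := B0 mod d) in *.
  set (v1 := w01 - k1*p1 - k2*r1). set (v2 := w02 - k1*p2 - k2*r2).
  assert (Xv : v1*r2 - v2*r1 = ra).
  { assert (v1*r2 - v2*r1 = A0 - k1*d) by (unfold v1, v2, A0, d; ring). lia. }
  assert (Yv : p1*v2 - p2*v1 = rb).
  { assert (p1*v2 - p2*v1 = B0 - k2*d) by (unfold v1, v2, B0, d; ring). lia. }
  destruct (Z_le_gt_dec (ra + rb) d) as [Hle|Hgt].
  - exists v1, v2. simpl. rewrite Xv, Yv. lia.
  - exists (p1 + r1 - v1), (p2 + r2 - v2). simpl.
    assert (X : (p1 + r1 - v1)*r2 - (p2 + r2 - v2)*r1 = d - ra).
    { rewrite <- Xv. unfold d; ring. }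
    assert (Y : p1*(p2 + r2 - v2) - p2*(p1 + r1 - v1) = d - rb).
    { rewrite <- Yv. unfold d; ring. }
    rewrite X, Y. lia.
Qed.

Lemma lattice_pt (p1 p2 r1 r2 : Z) :
  2 <= p1*r2 - p2*r1 ->
  exists w1 w2 : Z,
    let d := p1*r2 - p2*r1 in
    let x := w1*r2 - w2*r1 in let y := p1*w2 - p2*w1 in
    0 <= x /\ 0 <= y /\ x + y <= d /\ ~ (x = 0 /\ y = 0) /\
    ~ (x = d /\ y = 0) /\ ~ (x = 0 /\ y = d).
Proof.
  intros Hd. set (d := p1*r2 - p2*r1) in *.
  destruct (classic ((1*r2 - 0*r1) mod d = 0 /\ (p1*0 - p2*1) mod d = 0)) as [H1|H1].
  2:{ apply (lattice_aux p1 p2 r1 r2 1 0); auto. }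
  destruct (classic ((0*r2 - 1*r1) mod d = 0 /\ (p1*1 - p2*0) mod d = 0)) as [H2|H2].
  2:{ apply (lattice_aux p1 p2 r1 r2 0 1); auto. }
  exfalso.
  destruct H1 as [H1a H1b]. destruct H2 as [H2a H2b].
  apply Z.mod_divide in H1a; [|lia]. apply Z.mod_divide in H1b; [|lia].
  apply Z.mod_divide in H2a; [|lia]. apply Z.mod_divide in H2b; [|lia].
  destruct H1a as [a1 Ha1]. destruct H1b as [a2 Ha2].
  destruct H2a as [a3 Ha3]. destruct H2b as [a4 Ha4].
  assert (Er2 : r2 = a1 * d) by lia. assert (Ep2 : p2 = - (a2 * d)) by lia.
  assert (Er1 : r1 = - (a3 * d)) by lia. assert (Ep1 : p1 = a4 * d) by lia.
  assert (E : d = p1*r2 - p2*r1) by reflexivity.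
  rewrite Er2, Ep2, Er1, Ep1 in E.
  assert (E2 : d * (d * (a4 * a1 - a2 * a3) - 1) = 0).
  { replace (d * (d * (a4 * a1 - a2 * a3) - 1)) with ((a4 * d * (a1 * d) - - (a2 * d) * - (a3 * d)) - d) by ring. lia. }
  apply Z.mul_eq_0 in E2. destruct E2 as [E2|E2]; [lia|].
  assert (d * (a4 * a1 - a2 * a3) = 1) by lia.
  clearbody d. revert H Hd. clear. generalize (a4 * a1 - a2 * a3). intros m Hm Hd. destruct (Z_le_gt_dec m 0); nia.
Qed.
Close Scope Z_scope.
Lemma quad_bary m la lb lc x1 x2 y1 y2 z1 z2 : la + lb + lc = 1 ->
  la * quad m (x1,x2) + lb * quad m (y1,y2) + lc * quad m (z1,z2) =
  quad m (la*x1+lb*y1+lc*z1, la*x2+lb*y2+lc*z2)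
  + la * quad m (x1 - (la*x1+lb*y1+lc*z1), x2 - (la*x2+lb*y2+lc*z2))
  + lb * quad m (y1 - (la*x1+lb*y1+lc*z1), y2 - (la*x2+lb*y2+lc*z2))
  + lc * quad m (z1 - (la*x1+lb*y1+lc*z1), z2 - (la*x2+lb*y2+lc*z2)).
Proof.
  intros H. rewrite !quad_expand; simpl.
  replace la with (1 - lb - lc) by lra. ring.
Qed.

Lemma conv1 la lb lc x y z : 0 <= la -> 0 <= lb -> 0 <= lc -> la + lb + lc = 1 ->
  (la*x+lb*y+lc*z) * (la*x+lb*y+lc*z) <= la*(x*x) + lb*(y*y) + lc*(z*z).
Proof.
  intros Ha Hb Hc H. set (P := la*x+lb*y+lc*z).
  assert (E : la*(x*x) + lb*(y*y) + lc*(z*z) = P*P + la*((x-P)*(x-P)) + lb*((y-P)*(y-P)) + lc*((z-P)*(z-P))).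
  { unfold P. replace la with (1 - lb - lc) by lra. ring. }
  rewrite E. pose proof (Rle_0_sqr (x-P)); pose proof (Rle_0_sqr (y-P)); pose proof (Rle_0_sqr (z-P)).
  unfold Rsqr in *. nra.
Qed.

Lemma int_vec (k1 k2 : Z) : ~ (k1 = 0 /\ k2 = 0)%Z -> 1 <= IZR k1 * IZR k1 + IZR k2 * IZR k2.
Proof.
  intros H.
  assert (Hs : forall k : Z, 0 <= IZR k * IZR k) by (intros; nra).
  destruct (Z.eq_dec k1 0) as [->|H1].
  - assert (H2 : (k2 <= -1 \/ 1 <= k2)%Z) by lia.
    destruct H2 as [H2|H2]; apply IZR_le in H2; simpl in *; nra.
  - assert (H2 : (k1 <= -1 \/ 1 <= k1)%Z) by lia. pose proof (Hs k2).
    destruct H2 as [H2|H2]; apply IZR_le in H2; simpl in *; nra.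
Qed.

Section Lat.
Variable D : R2 -> Sym2.
Variable K h : R.
Hypothesis KU : forall z x, quad (Mof D z) x <= K * dot x x.
Hypothesis KL : forall z x, dot x x <= K * quad (Mof D z) x.
Hypothesis K1 : 1 <= K.
Hypothesis hpos : 0 < h.
Variable q : R2.
Variable r2 : R.
Hypothesis Hvor : forall p, grid h p -> r2 <= quad (Mof D p) (vsub q p).
Hypothesis Hr2 : r2 <= K * (h * h) / 2.
Hypothesis Hr2p : 0 <= r2.
Variable tau : R.
Hypothesis Htau1 : 1 <= tau.
Hypothesis Htau : forall p p', enorm (vsub p p') <= 2 * K * h ->
  forall x, quad (Mof D p') x <= tau * tau * quad (Mof D p) x.
Hypothesis Htk : K * K * (tau * tau - 1) < 1.

Lemma no_lattice (A B C : R2) (u1 u2 w : Z * Z)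
  (HA : quad (Mof D A) (vsub q A) = r2)
  (HB : quad (Mof D B) (vsub q B) = r2)
  (HC : quad (Mof D C) (vsub q C) = r2)
  (gA : grid h A)
  (HBA : vsub B A = vscale h (zvec u1))
  (HCA : vsub C A = vscale h (zvec u2))
  (dAB : dot (vsub B A) (vsub B A) <= 2 * (K * K) * (h * h))
  (dAC : dot (vsub C A) (vsub C A) <= 2 * (K * K) * (h * h))
  (dBC : dot (vsub C B) (vsub C B) <= 2 * (K * K) * (h * h))
  (Hx : let x := (fst w * snd u2 - snd w * fst u2)%Z in
        let y := (fst u1 * snd w - snd u1 * fst w)%Z in
        let d := (fst u1 * snd u2 - snd u1 * fst u2)%Z in
        (0 <= x /\ 0 <= y /\ x + y <= d /\ ~ (x = 0 /\ y = 0) /\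
        ~ (x = d /\ y = 0) /\ ~ (x = 0 /\ y = d))%Z) : False.
Proof.
  destruct u1 as [p1 p2]; destruct u2 as [s1 s2]; destruct w as [w1 w2]; simpl in Hx.
  destruct Hx as [X0 [Y0 [XY [N0 [N1 N2]]]]].
  assert (Hd : (0 < p1 * s2 - p2 * s1)%Z) by lia.
  assert (Nw : ~ (w1 = 0 /\ w2 = 0)%Z).
  { intros [-> ->]. apply N0. lia. }
  assert (Nw1 : ~ (w1 - p1 = 0 /\ w2 - p2 = 0)%Z).
  { intros [E1 E2]. assert (w1 = p1)%Z by lia. assert (w2 = p2)%Z by lia. subst. apply N1. split; ring. }
  assert (Nw2 : ~ (w1 - s1 = 0 /\ w2 - s2 = 0)%Z).
  { intros [E1 E2]. assert (w1 = s1)%Z by lia. assert (w2 = s2)%Z by lia. subst. apply N2. split; ring. }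
  apply int_vec in Nw. apply int_vec in Nw1. apply int_vec in Nw2.
  rewrite !minus_IZR in Nw1, Nw2.
  apply IZR_lt in Hd. apply IZR_le in X0. apply IZR_le in Y0. apply IZR_le in XY.
  rewrite ?plus_IZR in XY. rewrite ?minus_IZR, ?mult_IZR in *.
  set (P1 := IZR p1) in *. set (P2 := IZR p2) in *. set (S1 := IZR s1) in *. set (S2 := IZR s2) in *.
  set (W1 := IZR w1) in *. set (W2 := IZR w2) in *.
  set (d := P1 * S2 - P2 * S1) in *.
  set (lb := (W1 * S2 - W2 * S1) / d). set (lc := (P1 * W2 - P2 * W1) / d).
  set (la := 1 - lb - lc).
  assert (Elb : 0 <= lb) by (unfold lb; unfold Rdiv; apply Rmult_le_pos; [lra|apply Rlt_le, Rinv_0_lt_compat; lra]).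
  assert (Elc : 0 <= lc) by (unfold lc; unfold Rdiv; apply Rmult_le_pos; [lra|apply Rlt_le, Rinv_0_lt_compat; lra]).
  assert (Ela : 0 <= la).
  { unfold la, lb, lc. assert ((W1 * S2 - W2 * S1) / d + (P1 * W2 - P2 * W1) / d <= 1); [|lra].
    replace ((W1 * S2 - W2 * S1) / d + (P1 * W2 - P2 * W1) / d) with (((W1 * S2 - W2 * S1) + (P1 * W2 - P2 * W1)) / d) by (field; lra).
    apply (Rmult_le_reg_r d); [lra|]. replace (((W1 * S2 - W2 * S1) + (P1 * W2 - P2 * W1)) / d * d) with ((W1 * S2 - W2 * S1) + (P1 * W2 - P2 * W1)) by (field; lra). unfold d in *; lra. }
  assert (Hsum : la + lb + lc = 1) by (unfold la; ring).
  assert (EW1 : W1 = lb * P1 + lc * S1).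
  { unfold lb, lc. apply (Rmult_eq_reg_l d); [|lra].
    replace (d * ((W1 * S2 - W2 * S1) / d * P1 + (P1 * W2 - P2 * W1) / d * S1))
      with ((W1 * S2 - W2 * S1) * P1 + (P1 * W2 - P2 * W1) * S1) by (field; lra).
    unfold d; ring. }
  assert (EW2 : W2 = lb * P2 + lc * S2).
  { unfold lb, lc. apply (Rmult_eq_reg_l d); [|lra].
    replace (d * ((W1 * S2 - W2 * S1) / d * P2 + (P1 * W2 - P2 * W1) / d * S2))
      with ((W1 * S2 - W2 * S1) * P2 + (P1 * W2 - P2 * W1) * S2) by (field; lra).
    unfold d; ring. }
  destruct A as [A1 A2]; destruct B as [B1 B2]; destruct C as [C1 C2]; destruct q as [q1 q2].
  unfold vsub, vscale, zvec in HBA, HCA; simpl in HBA, HCA.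
  injection HBA as HB1 HB2. injection HCA as HC1 HC2. fold P1 P2 in HB1, HB2. fold S1 S2 in HC1, HC2.
  assert (EB1 : B1 = A1 + h * P1) by lra. assert (EB2 : B2 = A2 + h * P2) by lra.
  assert (EC1 : C1 = A1 + h * S1) by lra. assert (EC2 : C2 = A2 + h * S2) by lra.
  set (T1 := A1 + h * W1). set (T2 := A2 + h * W2).
  assert (gT : grid h (T1, T2)).
  { destruct gA as [[k1 k2] Hk]. exists ((k1 + w1)%Z, (k2 + w2)%Z).
    unfold vscale, zvec in *; simpl in *. injection Hk as Hk1 Hk2. rewrite !plus_IZR.
    unfold T1, T2. rewrite Hk1, Hk2. f_equal; fold W1 W2; ring. }
  pose proof (Hvor _ gT) as HV.
  assert (ET1 : q1 - T1 = la*(q1-A1) + lb*(q1-B1) + lc*(q1-C1)).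
  { unfold T1. rewrite EW1, EB1, EC1.
    unfold la. ring. }
  assert (ET2 : q2 - T2 = la*(q2-A2) + lb*(q2-B2) + lc*(q2-C2)).
  { unfold T2. rewrite EW2, EB2, EC2.
    unfold la. ring. }
  pose proof (quad_bary (Mof D (T1,T2)) la lb lc (q1-A1) (q2-A2) (q1-B1) (q2-B2) (q1-C1) (q2-C2) Hsum) as QB.
  rewrite <- ET1, <- ET2 in QB.
  unfold vsub in HV; simpl in HV.
  unfold dot, vsub in dAB, dAC, dBC; simpl in dAB, dAC, dBC.
  assert (dist : forall X1 X2 : R, X1 * X1 + X2 * X2 <= 2 * (K*K) * (h*h) -> enorm (X1, X2) <= 2 * K * h).
  { intros X1 X2 HX. apply enorm_le; [nra|]. unfold dot; simpl. nra. }
  assert (DA : enorm (vsub (A1,A2) (T1,T2)) <= 2 * K * h).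
  { unfold vsub; simpl. apply dist.
    replace (A1 - T1) with (la*0 + lb*(A1-B1) + lc*(A1-C1)) by (unfold T1; rewrite EW1, EB1, EC1; unfold la; ring).
    replace (A2 - T2) with (la*0 + lb*(A2-B2) + lc*(A2-C2)) by (unfold T2; rewrite EW2, EB2, EC2; unfold la; ring).
    pose proof (conv1 la lb lc 0 (A1-B1) (A1-C1) Ela Elb Elc Hsum).
    pose proof (conv1 la lb lc 0 (A2-B2) (A2-C2) Ela Elb Elc Hsum). nra. }
  assert (DB : enorm (vsub (B1,B2) (T1,T2)) <= 2 * K * h).
  { unfold vsub; simpl. apply dist.
    replace (B1 - T1) with (la*(B1-A1) + lb*0 + lc*(B1-C1)) by (unfold T1; rewrite EW1, EB1, EC1; unfold la; ring).
    replace (B2 - T2) with (la*(B2-A2) + lb*0 + lc*(B2-C2)) by (unfold T2; rewrite EW2, EB2, EC2; unfold la; ring).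
    pose proof (conv1 la lb lc (B1-A1) 0 (B1-C1) Ela Elb Elc Hsum).
    pose proof (conv1 la lb lc (B2-A2) 0 (B2-C2) Ela Elb Elc Hsum). nra. }
  assert (DC : enorm (vsub (C1,C2) (T1,T2)) <= 2 * K * h).
  { unfold vsub; simpl. apply dist.
    replace (C1 - T1) with (la*(C1-A1) + lb*(C1-B1) + lc*0) by (unfold T1; rewrite EW1, EB1, EC1; unfold la; ring).
    replace (C2 - T2) with (la*(C2-A2) + lb*(C2-B2) + lc*0) by (unfold T2; rewrite EW2, EB2, EC2; unfold la; ring).
    pose proof (conv1 la lb lc (C1-A1) (C1-B1) 0 Ela Elb Elc Hsum).
    pose proof (conv1 la lb lc (C2-A2) (C2-B2) 0 Ela Elb Elc Hsum). nra. }
  pose proof (Htau _ _ DA (q1-A1, q2-A2)) as TA.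
  pose proof (Htau _ _ DB (q1-B1, q2-B2)) as TB.
  pose proof (Htau _ _ DC (q1-C1, q2-C2)) as TC.
  unfold vsub in HA, HB, HC; simpl in HA, HB, HC.
  rewrite HA in TA. rewrite HB in TB. rewrite HC in TC.
  set (N := Mof D (T1, T2)) in *.
  assert (LA : h * h <= K * quad N (q1 - A1 - (q1 - T1), q2 - A2 - (q2 - T2))).
  { eapply Rle_trans; [|apply KL]. unfold dot; simpl.
    replace (q1 - A1 - (q1 - T1)) with (h * W1) by (unfold T1; ring).
    replace (q2 - A2 - (q2 - T2)) with (h * W2) by (unfold T2; ring). nra. }
  assert (LB : h * h <= K * quad N (q1 - B1 - (q1 - T1), q2 - B2 - (q2 - T2))).
  { eapply Rle_trans; [|apply KL]. unfold dot; simpl.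
    replace (q1 - B1 - (q1 - T1)) with (h * (W1 - P1)) by (unfold T1; rewrite EB1; ring).
    replace (q2 - B2 - (q2 - T2)) with (h * (W2 - P2)) by (unfold T2; rewrite EB2; ring). nra. }
  assert (LC : h * h <= K * quad N (q1 - C1 - (q1 - T1), q2 - C2 - (q2 - T2))).
  { eapply Rle_trans; [|apply KL]. unfold dot; simpl.
    replace (q1 - C1 - (q1 - T1)) with (h * (W1 - S1)) by (unfold T1; rewrite EC1; ring).
    replace (q2 - C2 - (q2 - T2)) with (h * (W2 - S2)) by (unfold T2; rewrite EC2; ring). nra. }
  set (QA := quad N (q1 - A1 - (q1 - T1), q2 - A2 - (q2 - T2))) in *.
  set (QB' := quad N (q1 - B1 - (q1 - T1), q2 - B2 - (q2 - T2))) in *.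
  set (QC := quad N (q1 - C1 - (q1 - T1), q2 - C2 - (q2 - T2))) in *.
  assert (Hsumq : h * h <= K * (la * QA + lb * QB' + lc * QC)).
  { replace (h*h) with (la*(h*h) + lb*(h*h) + lc*(h*h)) by (rewrite <- Rmult_plus_distr_r, <- Rmult_plus_distr_r, Hsum; ring).
    nra. }
  assert (Hmain : K * r2 + h * h <= K * (tau * tau) * r2).
  { assert (la * quad N (q1 - A1, q2 - A2) + lb * quad N (q1 - B1, q2 - B2) + lc * quad N (q1 - C1, q2 - C2)
            <= tau * tau * r2).
    { replace (tau*tau*r2) with (la*(tau*tau*r2) + lb*(tau*tau*r2) + lc*(tau*tau*r2)) by (rewrite <- Rmult_plus_distr_r, <- Rmult_plus_distr_r, Hsum; ring).
      nra. }
    nra. }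
  assert (h * h <= K * (tau * tau - 1) * r2) by nra.
  assert (K * (tau * tau - 1) * r2 <= K * (tau * tau - 1) * (K * (h * h) / 2)).
  { apply Rmult_le_compat_l; auto. nra. }
  nra.
Qed.
End Lat.
Lemma round_grid h q : 0 < h -> exists p, grid h p /\ dot (vsub q p) (vsub q p) <= h * h / 2.
Proof.
  intros hp. destruct q as [q1 q2].
  set (k1 := up (q1 / h - / 2)). set (k2 := up (q2 / h - / 2)).
  destruct (archimed (q1 / h - / 2)) as [A1 B1]. destruct (archimed (q2 / h - / 2)) as [A2 B2].
  fold k1 in A1, B1. fold k2 in A2, B2.
  exists (vscale h (zvec (k1, k2))). split; [exists (k1,k2); auto|].
  unfold vsub, vscale, zvec, dot; simpl.
  set (y1 := q1 / h) in *. set (y2 := q2 / h) in *.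
  replace q1 with (h * y1) by (unfold y1; field; lra).
  replace q2 with (h * y2) by (unfold y2; field; lra).
  replace (h * y1 - h * IZR k1) with (h * (y1 - IZR k1)) by ring.
  replace (h * y2 - h * IZR k2) with (h * (y2 - IZR k2)) by ring.
  assert ((y1 - IZR k1) * (y1 - IZR k1) <= /4) by nra.
  assert ((y2 - IZR k2) * (y2 - IZR k2) <= /4) by nra.
  nra.
Qed.

Lemma vor_ineq D K h p q (KL : forall z x, dot x x <= K * quad (Mof D z) x) (K1 : 1 <= K) :
  inVor D h p q -> grid h p /\
  forall p', grid h p' -> quad (Mof D p) (vsub q p) <= quad (Mof D p') (vsub q p').
Proof.
  intros [G H]. split; auto. intros p' G'. specialize (H p' G').
  unfold delta, Mnorm in H. apply sqrt_le_0; auto; apply (quad_nonneg D K KL K1).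
Qed.

Lemma conv_tri (V : R2 -> Prop) a b c z :
  set_eq V (fun x => x = a \/ x = b \/ x = c) -> conv V z ->
  exists la lb lc, 0 <= la /\ 0 <= lb /\ 0 <= lc /\ la + lb + lc = 1 /\
    z = (la * fst a + lb * fst b + lc * fst c, la * snd a + lb * snd b + lc * snd c).
Proof.
  intros HV [l [Hf [Hw Hp]]]. subst z.
  assert (G : forall l, Forall (fun wp => 0 <= fst wp /\ V (snd wp)) l ->
    exists la lb lc, 0 <= la /\ 0 <= lb /\ 0 <= lc /\
      la + lb + lc = fold_right (fun wp acc => fst wp + acc) 0 l /\
      fold_right (fun wp acc => vadd (vscale (fst wp) (snd wp)) acc) (0, 0) l =
      (la * fst a + lb * fst b + lc * fst c, la * snd a + lb * snd b + lc * snd c)).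
  { induction l0 as [|[w x] l0 IH]; intros HF.
    - exists 0, 0, 0. simpl. repeat split; try lra. f_equal; ring.
    - destruct (Forall_inv HF) as [Hw0 Hx]. pose proof (Forall_inv_tail HF) as HF'. simpl in *.
      destruct (IH HF') as [la [lb [lc [P1 [P2 [P3 [P4 P5]]]]]]].
      rewrite P5. apply HV in Hx. destruct Hx as [ -> | [ -> | -> ] ].
      + exists (la + w), lb, lc. repeat split; try lra. unfold vadd, vscale; simpl; f_equal; ring.
      + exists la, (lb + w), lc. repeat split; try lra. unfold vadd, vscale; simpl; f_equal; ring.
      + exists la, lb, (lc + w). repeat split; try lra. unfold vadd, vscale; simpl; f_equal; ring. }
  destruct (G l Hf) as [la [lb [lc [P1 [P2 [P3 [P4 P5]]]]]]].
  exists la, lb, lc. repeat split; auto. lra.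
Qed.

Lemma nondeg (V : R2 -> Prop) a b c : is_triangle_vs V ->
  set_eq V (fun x => x = a \/ x = b \/ x = c) -> det2 (vsub b a) (vsub c a) <> 0.
Proof.
  intros [a' [b' [c' [Hd Hs]]]] Habc Hz. apply Hd.
  assert (Ha : a' = a \/ a' = b \/ a' = c) by (apply Habc, Hs; auto).
  assert (Hb : b' = a \/ b' = b \/ b' = c) by (apply Habc, Hs; auto).
  assert (Hc : c' = a \/ c' = b \/ c' = c) by (apply Habc, Hs; auto).
  destruct a as [a1 a2]; destruct b as [b1 b2]; destruct c as [c1 c2].
  unfold det2, vsub in *; simpl in *.
  destruct Ha as [ -> | [ -> | -> ] ]; destruct Hb as [ -> | [ -> | -> ] ]; destruct Hc as [ -> | [ -> | -> ] ]; simpl; nra.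
Qed.
Lemma par_ineq m x1 x2 y1 y2 : 0 <= quad m (x1 + y1, x2 + y2) ->
  quad m (x1 - y1, x2 - y2) <= 2 * quad m (x1, x2) + 2 * quad m (y1, y2).
Proof. intros H. rewrite !quad_expand in *; simpl in *. nra. Qed.

Theorem mainTheorem8
  (D : R2 -> Sym2) (HD : D_admissible D)
  (K : R) (HK : is_kappa_max D K)
  (n : nat) (Hn : (1 <= n)%nat)
  (tauh tau2h : R)
  (Htauh : is_tau_h D K (/ INR n) tauh)
  (Htau2h : is_tau_h D K (2 * / INR n) tau2h)
  (Hass : tauh < sqrt (1 + / (K * K)))
  (Th : (R2 -> Prop) -> Prop) (HTh : ADT D (/ INR n) Th)
  (V : R2 -> Prop) (HV : Th V)
  (a b c : R2) (Habc : set_eq V (fun x => x = a \/ x = b \/ x = c))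
  (e f g : Z * Z)
  (He : vsub b a = vscale (/ INR n) (zvec e))
  (Hf : vsub c b = vscale (/ INR n) (zvec f))
  (Hg : vsub a c = vscale (/ INR n) (zvec g)) :
  Rmax (enorm (zvec e)) (Rmax (enorm (zvec f)) (enorm (zvec g))) <= 2 * K /\
  (Rabs (det2 (zvec e) (zvec f)) = 1 /\
   Rabs (det2 (vsub b a) (vsub c a)) / 2 = (/ INR n) ^ 2 / 2) /\
  (forall z, conv V z ->
     bilin (Mof D z) (zvec e) (zvec f)
       <= K * (3 + 9 * tau2h ^ 2) * (tau2h ^ 2 - 1)).
Proof.
  destruct HD as [HS _].
  destruct (kappa_bounds D K HS HK) as [KU [KL K1]].
  assert (hpos : 0 < / INR n) by (apply Rinv_0_lt_compat, lt_0_INR; lia).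
  set (h := / INR n) in *.
  destruct HTh as [Htri [_ [_ [Hgen _]]]].
  pose proof (nondeg V a b c (Htri V HV) Habc) as Hnd.
  destruct (Hgen V HV) as [q [_ Hsub]].
  assert (Ga : inVor D h a q) by (apply Hsub, Habc; auto).
  assert (Gb : inVor D h b q) by (apply Hsub, Habc; auto).
  assert (Gc : inVor D h c q) by (apply Hsub, Habc; auto).
  apply (vor_ineq D K h a q KL K1) in Ga as [gA Va].
  apply (vor_ineq D K h b q KL K1) in Gb as [gB Vb].
  apply (vor_ineq D K h c q KL K1) in Gc as [gC Vc].
  set (r2 := quad (Mof D a) (vsub q a)).
  assert (Rb : quad (Mof D b) (vsub q b) = r2) by (apply Rle_antisym; [apply Vb | apply Va]; auto).
  assert (Rc : quad (Mof D c) (vsub q c) = r2) by (apply Rle_antisym; [apply Vc | apply Va]; auto).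
  assert (Hvor : forall p, grid h p -> r2 <= quad (Mof D p) (vsub q p)) by (intros; apply Va; auto).
  assert (Hr2p : 0 <= r2) by apply (quad_nonneg D K KL K1).
  assert (Hr2 : r2 <= K * (h * h) / 2).
  { destruct (round_grid h q hpos) as [p0 [g0 d0]].
    eapply Rle_trans; [apply Hvor, g0|]. eapply Rle_trans; [apply KU|]. nra. }
  assert (Dqa : dot (vsub q a) (vsub q a) <= K * r2) by apply KL.
  assert (Dqb : dot (vsub q b) (vsub q b) <= K * r2) by (rewrite <- Rb; apply KL).
  assert (Dqc : dot (vsub q c) (vsub q c) <= K * r2) by (rewrite <- Rc; apply KL).
  assert (T1 : 1 <= tauh).
  { destruct (tau_h_use D K KU KL K1 h tauh a a Htauh) as [Ht _]; auto.
    apply enorm_le; [nra|]. unfold vsub, dot; simpl. nra. }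
  assert (Htk : K * K * (tauh * tauh - 1) < 1).
  { assert (Hs : sqrt (1 + / (K * K)) * sqrt (1 + / (K * K)) = 1 + / (K * K)).
    { apply sqrt_sqrt. assert (0 < / (K*K)) by (apply Rinv_0_lt_compat; nra). lra. }
    assert (tauh * tauh < 1 + / (K * K)) by nra.
    assert (K * K * (tauh * tauh) < K * K * (1 + / (K * K))) by (apply Rmult_lt_compat_l; nra).
    replace (K * K * (1 + / (K * K))) with (K * K + 1) in H0 by (field; nra). nra. }
  assert (Htau : forall p p', enorm (vsub p p') <= 2 * K * h ->
    forall x, quad (Mof D p') x <= tauh * tauh * quad (Mof D p) x).
  { intros p p' Hd x. destruct (tau_h_use D K KU KL K1 h tauh p p' Htauh Hd) as [_ [H1 _]]. apply H1. }
  destruct e as [e1 e2]; destruct f as [f1 f2]; destruct g as [g1 g2].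
  pose proof He as He'. pose proof Hf as Hf'.
  destruct a as [a1 a2]; destruct b as [b1 b2]; destruct c as [c1 c2]; destruct q as [q1 q2].
  unfold vsub, vscale, zvec in He, Hf, Hg; simpl in He, Hf, Hg.
  injection He as He1 He2. injection Hf as Hf1 Hf2. injection Hg as Hg1 Hg2.
  unfold dot, vsub in Dqa, Dqb, Dqc; simpl in Dqa, Dqb, Dqc.
  assert (Hkr : K * r2 <= K * (K * (h * h) / 2)) by (apply Rmult_le_compat_l; lra).
  assert (par : forall x1 x2 y1 y2 : R, (x1 - y1) * (x1 - y1) + (x2 - y2) * (x2 - y2) <=
     2 * (x1 * x1 + x2 * x2) + 2 * (y1 * y1 + y2 * y2)).
  { intros. pose proof (Rle_0_sqr (x1 + y1)). pose proof (Rle_0_sqr (x2 + y2)). unfold Rsqr in *. nra. }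
  assert (dAB : (b1 - a1) * (b1 - a1) + (b2 - a2) * (b2 - a2) <= 2 * (K * K) * (h * h)).
  { pose proof (par (q1 - a1) (q2 - a2) (q1 - b1) (q2 - b2)).
    replace (b1 - a1) with ((q1 - a1) - (q1 - b1)) by ring. replace (b2 - a2) with ((q2 - a2) - (q2 - b2)) by ring. lra. }
  assert (dAC : (c1 - a1) * (c1 - a1) + (c2 - a2) * (c2 - a2) <= 2 * (K * K) * (h * h)).
  { pose proof (par (q1 - a1) (q2 - a2) (q1 - c1) (q2 - c2)).
    replace (c1 - a1) with ((q1 - a1) - (q1 - c1)) by ring. replace (c2 - a2) with ((q2 - a2) - (q2 - c2)) by ring. lra. }
  assert (dBC : (c1 - b1) * (c1 - b1) + (c2 - b2) * (c2 - b2) <= 2 * (K * K) * (h * h)).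
  { pose proof (par (q1 - b1) (q2 - b2) (q1 - c1) (q2 - c2)).
    replace (c1 - b1) with ((q1 - b1) - (q1 - c1)) by ring. replace (c2 - b2) with ((q2 - b2) - (q2 - c2)) by ring. lra. }
  split.
  {
    assert (Hz : forall k1 k2 : Z, h * h * (IZR k1 * IZR k1 + IZR k2 * IZR k2) <= 2 * (K * K) * (h * h) ->
              enorm (zvec (k1, k2)) <= 2 * K).
    { intros k1 k2 Hk. apply enorm_le; [lra|]. unfold dot, zvec; simpl.
      assert (IZR k1 * IZR k1 + IZR k2 * IZR k2 <= 2 * (K * K)).
      { apply (Rmult_le_reg_l (h*h)); [nra|]. nra. }
      nra. }
    apply Rmax_lub; [|apply Rmax_lub]; apply Hz.
    - replace (h * h * (IZR e1 * IZR e1 + IZR e2 * IZR e2)) with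
        ((b1 - a1) * (b1 - a1) + (b2 - a2) * (b2 - a2)) by (rewrite He1, He2; ring). nra.
    - replace (h * h * (IZR f1 * IZR f1 + IZR f2 * IZR f2)) with
        ((c1 - b1) * (c1 - b1) + (c2 - b2) * (c2 - b2)) by (rewrite Hf1, Hf2; ring). nra.
    - replace (h * h * (IZR g1 * IZR g1 + IZR g2 * IZR g2)) with
        ((a1 - c1) * (a1 - c1) + (a2 - c2) * (a2 - c2)) by (rewrite Hg1, Hg2; ring). nra. }
  assert (Edet : det2 (vsub (b1, b2) (a1, a2)) (vsub (c1, c2) (a1, a2)) = h * h * IZR (e1 * f2 - e2 * f1)).
  { unfold det2, vsub; simpl. rewrite minus_IZR, !mult_IZR.
    replace c1 with (b1 + h * IZR f1) by lra. replace c2 with (b2 + h * IZR f2) by lra.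
    replace b1 with (a1 + h * IZR e1) by lra. replace b2 with (a2 + h * IZR e2) by lra. ring. }
  assert (Hdet : (e1 * f2 - e2 * f1 = 1 \/ e1 * f2 - e2 * f1 = -1)%Z).
  { assert (Hd0 : (e1 * f2 - e2 * f1 <> 0)%Z).
    { intros H0. apply Hnd. rewrite Edet, H0. simpl. ring. }
    destruct (Z_le_gt_dec 2 (e1 * f2 - e2 * f1)) as [H2|H2].
    - exfalso.
      destruct (lattice_pt e1 e2 (e1 + f1) (e2 + f2)) as [w1 [w2 Hw]].
      { replace (e1 * (e2 + f2) - e2 * (e1 + f1))%Z with (e1 * f2 - e2 * f1)%Z by ring. lia. }
      apply (no_lattice D K h KL K1 hpos (q1,q2) r2 Hvor Hr2 Hr2p tauh Htau Htk
               (a1,a2) (b1,b2) (c1,c2) (e1,e2) ((e1+f1)%Z, (e2+f2)%Z) (w1,w2)); auto;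
        try (cbv zeta in Hw |- *; simpl; exact Hw);
        unfold vsub, vscale, zvec, dot; simpl; rewrite ?plus_IZR; try (f_equal; lra); try lra.
    - destruct (Z_le_gt_dec (e1 * f2 - e2 * f1) (-2)) as [H3|H3]; [|lia].
      exfalso.
      destruct (lattice_pt (e1 + f1) (e2 + f2) e1 e2) as [w1 [w2 Hw]].
      { replace ((e1 + f1) * e2 - (e2 + f2) * e1)%Z with (- (e1 * f2 - e2 * f1))%Z by ring. lia. }
      apply (no_lattice D K h KL K1 hpos (q1,q2) r2 Hvor Hr2 Hr2p tauh Htau Htk
               (a1,a2) (c1,c2) (b1,b2) ((e1+f1)%Z, (e2+f2)%Z) (e1,e2) (w1,w2)); auto;
        try (cbv zeta in Hw |- *; simpl; exact Hw);
        unfold vsub, vscale, zvec, dot; simpl; rewrite ?plus_IZR; try (f_equal; lra); try lra.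
    }
  split.
  { assert (Rabs (IZR (e1 * f2 - e2 * f1)) = 1).
    { destruct Hdet as [-> | ->]; unfold Rabs; destruct Rcase_abs; lra. }
    split.
    - unfold det2, zvec; simpl. rewrite <- H. f_equal. rewrite minus_IZR, !mult_IZR. ring.
    - rewrite Edet, Rabs_mult, H. rewrite Rabs_right by nra. simpl. field. }
  intros z Hz.
  destruct (conv_tri V (a1,a2) (b1,b2) (c1,c2) z Habc Hz) as [la [lb [lc [La [Lb [Lc [Ls Ez]]]]]]].
  simpl in Ez. subst z.
  set (p1 := a1 + c1 - b1). set (p2 := a2 + c2 - b2).
  assert (gP : grid h (p1, p2)).
  { destruct gA as [[ka1 ka2] Hka]. destruct gB as [[kb1 kb2] Hkb]. destruct gC as [[kc1 kc2] Hkc].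
    exists ((ka1 + kc1 - kb1)%Z, (ka2 + kc2 - kb2)%Z).
    unfold vscale, zvec in *; simpl in *.
    injection Hka as Ha1 Ha2. injection Hkb as Hb1 Hb2. injection Hkc as Hc1 Hc2.
    unfold p1, p2. rewrite !minus_IZR, !plus_IZR. f_equal; subst; ring. }
  assert (H2h : forall p p', enorm (vsub p p') <= 2 * K * (2 * h) ->
    1 <= tau2h /\ (forall x, quad (Mof D p') x <= tau2h * tau2h * quad (Mof D p) x) /\
    (forall x, quad (Mof D p) x <= tau2h * tau2h * quad (Mof D p') x)).
  { intros p p' Hd. apply (tau_h_use D K KU KL K1 (2 * h) tau2h p p' Htau2h Hd). }
  assert (dist : forall X1 X2 : R, X1 * X1 + X2 * X2 <= 16 * (K*K) * (h*h) -> enorm (X1, X2) <= 2 * K * (2 * h)).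
  { intros X1 X2 HX. apply enorm_le; [nra|]. unfold dot; simpl. nra. }
  assert (dAp : enorm (vsub (a1,a2) (p1,p2)) <= 2 * K * (2 * h)).
  { unfold vsub; simpl. apply dist. unfold p1, p2.
    replace (a1 - (a1 + c1 - b1)) with (-(c1 - b1)) by ring.
    replace (a2 - (a2 + c2 - b2)) with (-(c2 - b2)) by ring. nra. }
  assert (dBp : enorm (vsub (b1,b2) (p1,p2)) <= 2 * K * (2 * h)).
  { unfold vsub; simpl. apply dist. unfold p1, p2.
    replace (b1 - (a1 + c1 - b1)) with ((b1 - a1) - (c1 - b1)) by ring.
    replace (b2 - (a2 + c2 - b2)) with ((b2 - a2) - (c2 - b2)) by ring. nra. }
  assert (dCp : enorm (vsub (c1,c2) (p1,p2)) <= 2 * K * (2 * h)).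
  { unfold vsub; simpl. apply dist. unfold p1, p2.
    replace (c1 - (a1 + c1 - b1)) with (b1 - a1) by ring.
    replace (c2 - (a2 + c2 - b2)) with (b2 - a2) by ring. nra. }
  assert (dZp : enorm (vsub (p1,p2) (la * a1 + lb * b1 + lc * c1, la * a2 + lb * b2 + lc * c2)) <= 2 * K * (2 * h)).
  { unfold vsub; simpl. apply dist.
    replace (p1 - (la * a1 + lb * b1 + lc * c1)) with (la * (p1 - a1) + lb * (p1 - b1) + lc * (p1 - c1))
      by (replace la with (1 - lb - lc) by lra; ring).
    replace (p2 - (la * a2 + lb * b2 + lc * c2)) with (la * (p2 - a2) + lb * (p2 - b2) + lc * (p2 - c2))
      by (replace la with (1 - lb - lc) by lra; ring).
    pose proof (conv1 la lb lc (p1-a1) (p1-b1) (p1-c1) La Lb Lc Ls).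
    pose proof (conv1 la lb lc (p2-a2) (p2-b2) (p2-c2) La Lb Lc Ls).
    assert (E1 : (p1 - a1) * (p1 - a1) + (p2 - a2) * (p2 - a2) <= 16 * (K*K) * (h*h)).
    { unfold p1, p2. replace (a1 + c1 - b1 - a1) with (c1 - b1) by ring.
      replace (a2 + c2 - b2 - a2) with (c2 - b2) by ring. nra. }
    assert (E2 : (p1 - b1) * (p1 - b1) + (p2 - b2) * (p2 - b2) <= 16 * (K*K) * (h*h)).
    { unfold p1, p2. replace (a1 + c1 - b1 - b1) with ((c1 - b1) - (b1 - a1)) by ring.
      replace (a2 + c2 - b2 - b2) with ((c2 - b2) - (b2 - a2)) by ring. nra. }
    assert (E3 : (p1 - c1) * (p1 - c1) + (p2 - c2) * (p2 - c2) <= 16 * (K*K) * (h*h)).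
    { unfold p1, p2. replace (a1 + c1 - b1 - c1) with (-(b1 - a1)) by ring.
      replace (a2 + c2 - b2 - c2) with (-(b2 - a2)) by ring. nra. }
    nra. }
  destruct (H2h _ _ dAp) as [Tt [TA1 TA2]].
  destruct (H2h _ _ dBp) as [_ [TB1 TB2]].
  destruct (H2h _ _ dCp) as [_ [TC1 TC2]].
  destruct (H2h _ _ dZp) as [_ [TZ1 TZ2]].
  set (N := Mof D (p1, p2)) in *.
  set (Mz := Mof D (la * a1 + lb * b1 + lc * c1, la * a2 + lb * b2 + lc * c2)) in *.
  set (t2 := tau2h * tau2h) in *.
  assert (Ht2 : 1 <= t2) by (unfold t2; nra).
  unfold vsub in Rb, Rc, r2; simpl in Rb, Rc, r2.
  pose proof (Hvor _ gP) as HVp. unfold vsub in HVp; simpl in HVp.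
  fold N in HVp.
  pose proof (TA1 (q1 - a1, q2 - a2)) as QA. fold r2 in QA.
  pose proof (TC1 (q1 - c1, q2 - c2)) as QC. rewrite Rc in QC.
  pose proof (TB1 (q1 - b1, q2 - b2)) as QBu. rewrite Rb in QBu.
  pose proof (TB2 (q1 - b1, q2 - b2)) as QBl. rewrite Rb in QBl.
  set (E1 := IZR e1) in *. set (E2 := IZR e2) in *. set (F1 := IZR f1) in *. set (F2 := IZR f2) in *.
  assert (Id : quad N (q1 - p1, q2 - p2) =
     quad N (q1 - a1, q2 - a2) - quad N (q1 - b1, q2 - b2) + quad N (q1 - c1, q2 - c2)
     - 2 * (h * h) * bilin N (E1, E2) (F1, F2)).
  { unfold bilin, dot, mulv. rewrite !quad_expand; simpl. unfold p1, p2.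
    replace c1 with (b1 + h * F1) by lra. replace c2 with (b2 + h * F2) by lra.
    replace b1 with (a1 + h * E1) by lra. replace b2 with (a2 + h * E2) by lra. ring. }
  pose proof (quad_nonneg D K KL K1 (p1,p2) (q1 - b1, q2 - b2)) as Qb0. fold N in Qb0.
  set (Qa := quad N (q1 - a1, q2 - a2)) in *.
  set (Qb := quad N (q1 - b1, q2 - b2)) in *.
  set (Qc := quad N (q1 - c1, q2 - c2)) in *.
  assert (QBl2 : (2 - t2) * r2 <= Qb).
  { assert (Hsq : 0 <= (t2 - 1) * (t2 - 1) * r2) by (apply Rmult_le_pos; nra).
    assert (t2 * (Qb - (2 - t2) * r2) >= 0) by nra.
    destruct (Rle_lt_dec ((2 - t2) * r2) Qb); auto. nra. }
  assert (BN : 2 * (h * h) * bilin N (E1, E2) (F1, F2) <= 3 * (t2 - 1) * r2) by nra.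
  assert (BN' : bilin N (E1, E2) (F1, F2) <= 3 * (t2 - 1) * K / 4).
  { apply (Rmult_le_reg_l (2 * (h * h))); [nra|].
    assert (3 * (t2 - 1) * r2 <= 3 * (t2 - 1) * (K * (h * h) / 2)) by (apply Rmult_le_compat_l; nra).
    nra. }
  assert (Qe : quad N (E1, E2) <= 2 * t2 * K).
  { assert (h * h * quad N (E1, E2) <= 4 * t2 * r2).
    { replace (h * h * quad N (E1, E2)) with (quad N ((q1 - a1) - (q1 - b1), (q2 - a2) - (q2 - b2))).
      2:{ rewrite !quad_expand; simpl. replace b1 with (a1 + h * E1) by lra. replace b2 with (a2 + h * E2) by lra. ring. }
      eapply Rle_trans; [apply par_ineq; apply (quad_nonneg D K KL K1)|]. fold N Qa Qb. nra. }
    apply (Rmult_le_reg_l (h * h)); [nra|]. nra. }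
  assert (Qf : quad N (F1, F2) <= 2 * t2 * K).
  { assert (h * h * quad N (F1, F2) <= 4 * t2 * r2).
    { replace (h * h * quad N (F1, F2)) with (quad N ((q1 - b1) - (q1 - c1), (q2 - b2) - (q2 - c2))).
      2:{ rewrite !quad_expand; simpl. replace c1 with (b1 + h * F1) by lra. replace c2 with (b2 + h * F2) by lra. ring. }
      eapply Rle_trans; [apply par_ineq; apply (quad_nonneg D K KL K1)|]. fold N Qb Qc. nra. }
    apply (Rmult_le_reg_l (h * h)); [nra|]. nra. }
  unfold zvec; simpl. fold E1 E2 F1 F2.
  rewrite (bilin_polar Mz). rewrite (bilin_polar N) in BN'.
  unfold vadd, vsub in *; simpl in *.
  set (X := quad N (E1 + F1, E2 + F2)) in *. set (Y := quad N (E1 - F1, E2 - F2)) in *.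
  pose proof (TZ1 (E1 + F1, E2 + F2)) as Z1. fold Mz X in Z1. fold t2 in Z1.
  pose proof (TZ2 (E1 - F1, E2 - F2)) as Z2. fold Mz Y in Z2. fold t2 in Z2.
  pose proof (quad_nonneg D K KL K1 (la * a1 + lb * b1 + lc * c1, la * a2 + lb * b2 + lc * c2) (E1 - F1, E2 - F2)) as Zy.
  fold Mz in Zy.
  pose proof (quad_nonneg D K KL K1 (p1, p2) (E1 - F1, E2 - F2)) as Yp. fold N Y in Yp.
  assert (ZY : (2 - t2) * Y <= quad Mz (E1 - F1, E2 - F2)).
  { assert (Hsq : 0 <= (t2 - 1) * (t2 - 1) * Y) by (apply Rmult_le_pos; nra).
    assert (t2 * (quad Mz (E1 - F1, E2 - F2) - (2 - t2) * Y) >= 0) by nra.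
    destruct (Rle_lt_dec ((2 - t2) * Y) (quad Mz (E1 - F1, E2 - F2))); auto. nra. }
  assert (XY : X + Y = 2 * quad N (E1, E2) + 2 * quad N (F1, F2)).
  { unfold X, Y. rewrite !quad_expand; simpl. ring. }
  replace (tau2h * (tau2h * 1)) with t2 by (unfold t2; ring).
  assert (0 <= X) by apply (quad_nonneg D K KL K1).
  assert (S1 : quad Mz (E1 + F1, E2 + F2) - quad Mz (E1 - F1, E2 - F2) <= (X - Y) + (t2 - 1) * (X + Y)) by lra.
  assert (S4 : (t2 - 1) * (X + Y) <= (t2 - 1) * (8 * t2 * K)).
  { apply Rmult_le_compat_l; lra. }
  assert (S5 : 3 * (t2 - 1) * K / 4 + (t2 - 1) * (8 * t2 * K) / 4 <= K * (3 + 9 * t2) * (t2 - 1)).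
  { assert (0 <= K * (t2 - 1)) by nra.
    assert (0 <= K * (t2 - 1) * (9/4 + t2)) by nra. nra. }
  lra.
Qed.
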